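(* Let $\mathcal{V}$ be a finite set with $|\mathcal{V}|\ge 2$, and for a logit vector $\boldsymbol{z}\in\mathbb{R}^{|\mathcal{V}|}$ let $\pi_{\boldsymbol{z}}(a)=\frac{\exp z_a}{\sum_{a'\in\mathcal{V}}\exp z_{a'}}$. (i) For any fixed target action $a\in\mathcal{V}$, the SFT loss $\mathcal{L}_{\text{SFT}}(\boldsymbol{z})=-\log\pi_{\boldsymbol{z}}(a)$ is a convex function of $\boldsymbol{z}\in\mathbb{R}^{|\mathcal{V}|}$ (its Hessian in $\boldsymbol{z}$ is positive semi-definite everywhere). (ii) Fix a sampled action $a\in\mathcal{V}$, a behavioral probability $\pi_{\text{old}}(a)\in(0,1]$, an advantage value $A\neq 0$ and a clip range $\epsilon\in(0,1)$. Let $r(\boldsymbol{z})=\pi_{\boldsymbol{z}}(a)/\pi_{\text{old}}(a)$ and $$\mathcal{L}_{\text{PPO}}(\boldsymbol{z})=-\min\bigl(r(\boldsymbol{z})A,\ \mathrm{clip}(r(\boldsymbol{z}),1-\epsilon,1+\epsilon)A\bigr),$$ where $\mathrm{clip}(x,l,u)=\min(\max(x,l),u)$. Then $\mathcal{L}_{\text{PPO}}$ is not a convex function of $\boldsymbol{z}$: its Hessian with respect to $\boldsymbol{z}$ fails to be positive semi-definite at some points where it is twice differentiable.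
   Context: A loss taking logits $\boldsymbol{z}$ as input is called logits convex if its Hessian with respect to $\boldsymbol{z}$ is positive semi-definite. The losses here are the single-time-step versions of the SFT negative log-likelihood and the PPO clipped surrogate objective. *)

(* Defs.v *)
From HB Require Import structures.
From mathcomp Require Import all_boot all_order all_algebra.
From mathcomp Require Import all_classical all_reals all_analysis.
Set Implicit Arguments. Unset Strict Implicit. Unset Printing Implicit Defensive.
Import Order.TTheory GRing.Theory Num.Theory.
Import numFieldNormedType.Exports.
Local Open Scope ring_scope.

Definition softmax (R : realType) (n : nat) (z : 'rV[R]_n) (a : 'I_n) : R :=
  expR (z 0 a) / \sum_(b < n) expR (z 0 b).

Definition sft_loss (R : realType) (n : nat) (a : 'I_n) (z : 'rV[R]_n) : R :=
  - ln (softmax z a).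

Definition clip (R : realType) (x l u : R) : R := Num.min (Num.max x l) u.

Definition ppo_loss (R : realType) (n : nat) (a : 'I_n) (piold A eps : R)
    (z : 'rV[R]_n) : R :=
  let r := softmax z a / piold in
  - Num.min (r * A) (clip r (1 - eps) (1 + eps) * A).

Definition basis_vec (R : realType) (n : nat) (j : 'I_n) : 'rV[R]_n :=
  delta_mx 0 j.

Definition grad (R : realType) (n : nat) (f : 'rV[R]_n -> R) (z : 'rV[R]_n)
  : 'rV[R]_n := \row_j ('D_(basis_vec R j) f) z.

Definition hessian (R : realType) (n : nat) (f : 'rV[R]_n -> R) (z : 'rV[R]_n)
  : 'M[R]_n := \matrix_(i, j) ('D_(basis_vec R i) ('D_(basis_vec R j) f)) z.

Definition twice_differentiable (R : realType) (n : nat) (f : 'rV[R]_n -> R)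
    (z : 'rV[R]_n) : Prop :=
  (\forall x \near z, differentiable f x) /\ differentiable (grad f) z.

Definition psd (R : realType) (n : nat) (M : 'M[R]_n) : Prop :=
  forall v : 'rV[R]_n, 0 <= (v *m M *m v^T) 0 0.

(* Main.v *)
Require Import Defs.
From HB Require Import structures.
From mathcomp Require Import all_boot all_order all_algebra.
From mathcomp Require Import all_classical all_reals all_analysis.
From mathcomp Require Import ring lra.
Import Order.TTheory GRing.Theory Num.Theory.
Import numFieldNormedType.Exports.
Local Open Scope ring_scope.

Section Loc.
Variables (R : realType) (V W : normedModType R).

Lemma near0_diff (h : V -> W) x : (\forall y \near x, h y = 0) ->
  differentiable h x.
Proof.
move=> hx0.
have hx : h x = 0 by apply: nbhs_singleton hx0.
have E : h \o shift x = cst (h x) + \0 +o_ 0 id.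
  apply/eqaddoP => e e0 /=.
  rewrite (near_shift 0 x) in hx0.
  move: hx0; apply: filterS => y /=; rewrite subr0 => hy.
  by rewrite !fctE /= hx hy addr0 subr0 normr0 mulr_ge0 // ltW.
have dh0 : 'd h x = \0 :> (V -> W) by apply/diff_unique => //; exact: cst_continuous.
by apply/diff_locallyP; rewrite dh0; split => //; exact: cst_continuous.
Qed.

Lemma near_eq_diff (f g : V -> W) x : (\forall y \near x, f y = g y) ->
  differentiable f x -> differentiable g x.
Proof.
move=> fg df.
have -> : g = f + (g - f) by apply/funext => y; rewrite !fctE addrC subrK.
apply: differentiableD => //; apply: near0_diff.
by move: fg; apply: filterS => y fy; rewrite !fctE fy subrr.
Qed.
End Loc.
Arguments near_eq_diff {R V W f g x}.

Section Aux.
Variables (R : realType) (n : nat).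
Implicit Types (x v : 'rV[R]_n).

Lemma Dcoord x v j : 'D_v (fun y : 'rV[R]_n => y 0 j) x = v 0 j.
Proof.
have := @derive_mx R _ 1 n id x v (@derivable_id _ _ x v).
rewrite derive_id => /(congr1 (fun M : 'M[R]_(1,n) => M 0 j)).
by rewrite mxE.
Qed.

Lemma diff_coord x j : differentiable (fun y : 'rV[R]_n => y 0 j) x.
Proof. exact: differentiable_coord. Qed.

Lemma Dchain (g : 'rV[R]_n -> R) (h : R -> R) x v :
  differentiable g x -> differentiable h (g x) ->
  'D_v (h \o g) x = 'D_v g x * h^`()%classic (g x).
Proof.
move=> dg dh.
rewrite deriveE; last exact: differentiable_comp.
rewrite diff_comp // /= diff1E // -deriveE //.
Qed.

Lemma diff_expR (y : R) : differentiable expR y.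
Proof. exact/derivable1_diffP/derivable_expR. Qed.

Lemma derive1_expR (y : R) : expR^`()%classic y = expR y.
Proof. by rewrite derive1E derive_val. Qed.

Lemma diff_ln (y : R) : 0 < y -> differentiable (@ln R) y.
Proof. by move=> y0; apply/derivable1_diffP; have [] := is_derive1_ln y0. Qed.

Lemma derive1_ln (y : R) : 0 < y -> (@ln R)^`()%classic y = y^-1.
Proof. by move=> y0; rewrite derive1E; have [] := is_derive1_ln y0. Qed.


Variable hn : (0 < n)%N.

Definition Sm (y : 'rV[R]_n) : R := \sum_(b < n) expR (y 0 b).

Lemma Sm_gt0 y : 0 < Sm y.
Proof.
rewrite /Sm (bigD1 (Ordinal hn)) //=.
apply: ltr_pwDl; first exact: expR_gt0.
by apply: sumr_ge0 => i _; apply/ltW/expR_gt0.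
Qed.

Lemma diffE1 j x : differentiable (fun y : 'rV[R]_n => expR (y 0 j)) x.
Proof.
exact: (differentiable_comp (diff_coord x j) (diff_expR _)).
Qed.

Lemma DE1 j x v : 'D_v (fun y : 'rV[R]_n => expR (y 0 j)) x = v 0 j * expR (x 0 j).
Proof.
have := @Dchain (fun y : 'rV[R]_n => y 0 j) expR x v (diff_coord x j) (diff_expR _).
by rewrite Dcoord derive1_expR.
Qed.

Lemma SmE : Sm = \sum_(b < n) (fun y : 'rV[R]_n => expR (y 0 b)).
Proof. by rewrite fct_sumE. Qed.

Lemma diffSm x : differentiable Sm x.
Proof. rewrite SmE; apply: differentiable_sum => i; exact: diffE1. Qed.

Lemma DSm x v : 'D_v Sm x = \sum_(b < n) v 0 b * expR (x 0 b).
Proof.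
rewrite SmE derive_sum; last by move=> i; apply/diff_derivable/diffE1.
by apply: eq_bigr => i _; rewrite DE1.
Qed.

Lemma softmaxE j : (fun y : 'rV[R]_n => softmax y j) =
  (fun y : 'rV[R]_n => expR (y 0 j)) * (fun y => (Sm y)^-1).
Proof. by apply/funext => y. Qed.

Lemma diff_softmax j x : differentiable (fun y : 'rV[R]_n => softmax y j) x.
Proof.
rewrite softmaxE; apply: differentiableM; first exact: diffE1.
apply: differentiableV; first exact: diffSm.
by rewrite gt_eqF // Sm_gt0.
Qed.

Lemma D_softmax j x v : 'D_v (fun y : 'rV[R]_n => softmax y j) x =
  softmax x j * (v 0 j - \sum_(b < n) v 0 b * softmax x b).
Proof.
rewrite softmaxE deriveM; last 2 first.
- exact/diff_derivable/diffE1.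
- apply/diff_derivable/differentiableV; first exact: diffSm.
  by rewrite gt_eqF // Sm_gt0.
rewrite deriveV; last 2 first.
- by rewrite gt_eqF // Sm_gt0.
- exact/diff_derivable/diffSm.
rewrite DSm DE1 /softmax -/(Sm x).
have S0 : Sm x != 0 by rewrite gt_eqF // Sm_gt0.
rewrite [X in _ - X](_ : _ = (\sum_(b < n) v 0 b * expR (x 0 b)) / Sm x); last first.
  by rewrite mulr_suml; apply: eq_bigr => i _; rewrite mulrA.
move: S0; set T := \sum_(b < n) _; set S := Sm x => S0.
rewrite /GRing.scale /=.
by field.
Qed.


Lemma basisE (i b : 'I_n) : basis_vec R i 0 b = (b == i)%:R.
Proof. by rewrite /basis_vec mxE eqxx. Qed.

Lemma sum_delta (F : 'I_n -> R) i : \sum_(b < n) (b == i)%:R * F b = F i.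
Proof.
rewrite (bigD1 i) //= eqxx mul1r big1 ?addr0 // => b.
by move=> /negbTE ->; rewrite mul0r.
Qed.

Lemma sum_delta' (F : 'I_n -> R) i : \sum_(b < n) (i == b)%:R * F b = F i.
Proof. by under eq_bigr do rewrite eq_sym; rewrite sum_delta. Qed.

Lemma sum_softmax x : \sum_(b < n) softmax x b = 1.
Proof.
rewrite /softmax -mulr_suml -/(Sm x) divff //.
by rewrite gt_eqF // Sm_gt0.
Qed.

Lemma softmax_gt0 x j : 0 < softmax x j.
Proof. by rewrite /softmax divr_gt0 // ?expR_gt0 // Sm_gt0. Qed.

Lemma D_softmax_basis i j x :
  'D_(basis_vec R i) (fun y : 'rV[R]_n => softmax y j) x =
  softmax x j * ((j == i)%:R - softmax x i).
Proof.
rewrite D_softmax basisE; congr (_ * (_ - _)).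
by under eq_bigr do rewrite basisE; rewrite sum_delta.
Qed.

Lemma twice_of (f : 'rV[R]_n -> R) (g : 'I_n -> 'rV[R]_n -> R) z :
  (\forall x \near z, differentiable f x /\
      forall j, 'D_(basis_vec R j) f x = g j x) ->
  (forall j, differentiable (g j) z) ->
  twice_differentiable f z /\
  hessian f z = \matrix_(i, j) 'D_(basis_vec R i) (g j) z.
Proof.
move=> H dg; split; first split.
- by move: H; apply: filterS => x [].
- apply: (@near_eq_diff _ _ _ (fun x => \sum_(j < n) g j x *: basis_vec R j)).
    move: H; apply: filterS => x [_ Dx].
    apply/rowP => k; rewrite !mxE summxE.
    under eq_bigr do rewrite mxE basisE mulrC.
    by rewrite sum_delta' Dx.
  have -> : (fun x => \sum_(j < n) g j x *: basis_vec R j) =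
     \sum_(j < n) (fun x => g j x *: basis_vec R j) by rewrite fct_sumE.
  apply: differentiable_sum => j; exact: differentiableZl.
- apply/matrixP => i j; rewrite !mxE; apply: near_eq_derive.
  by move: H; apply: filterS => x [_ Dx].
Qed.

Lemma sftE a : sft_loss a = (@ln R \o Sm) - (fun y : 'rV[R]_n => y 0 a).
Proof.
apply/funext => y; rewrite !fctE /sft_loss /softmax -/(Sm y).
rewrite ln_div ?posrE ?expR_gt0 ?Sm_gt0 // expRK opprB.
done.
Qed.

Lemma diff_sft a x : differentiable (sft_loss a) x.
Proof.
rewrite sftE; apply: differentiableB; last exact: diff_coord.
exact: (differentiable_comp (diffSm x) (diff_ln _ (Sm_gt0 x))).
Qed.

Lemma D_sft a x v : 'D_v (sft_loss a) x = \sum_(b < n) v 0 b * softmax x b - v 0 a.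
Proof.
rewrite sftE deriveB; last 2 first.
- exact/diff_derivable/(differentiable_comp (diffSm x) (diff_ln _ (Sm_gt0 x))).
- exact/diff_derivable/diff_coord.
rewrite Dchain; [|exact: diffSm|exact: diff_ln _ (Sm_gt0 x)].
rewrite (derive1_ln _ (Sm_gt0 x)) DSm Dcoord.
congr (_ - _); rewrite mulr_suml; apply: eq_bigr => i _.
by rewrite /softmax -/(Sm x) mulrA.
Qed.

Lemma DsubC (f : 'rV[R]_n -> R) c x v : derivable f x v ->
  'D_v (fun y => f y - c) x = 'D_v f x.
Proof.
move=> df; rewrite (_ : (fun y => f y - c) = f - cst c) //.
by rewrite deriveB ?derive_cst ?subr0 //; exact: derivable_cst.
Qed.

Lemma part1 (a : 'I_n) (z : 'rV[R]_n) :
  twice_differentiable (sft_loss a) z /\ psd (hessian (sft_loss a) z).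
Proof.
have H1 : \forall x \near z, differentiable (sft_loss a) x /\
      forall j, 'D_(basis_vec R j) (sft_loss a) x = softmax x j - (j == a)%:R.
  near=> x; split; first exact: diff_sft.
  move=> j; rewrite D_sft.
  by under eq_bigr do rewrite basisE; rewrite sum_delta basisE eq_sym.
have H2 : forall j, differentiable (fun x : 'rV[R]_n => softmax x j - (j == a)%:R) z.
  move=> j; apply: differentiableB => //; exact: diff_softmax.
have [tw ->] := twice_of _ _ _ H1 H2.
split => // v; rewrite !mxE.
have E i k : 'D_(basis_vec R i) (fun x : 'rV[R]_n => softmax x k - (k == a)%:R) z
    = softmax z k * ((k == i)%:R - softmax z i).
  by rewrite DsubC ?D_softmax_basis //; apply/diff_derivable/diff_softmax.
under eq_bigr => k _ do rewrite !mxE.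
under eq_bigr => k _ do under eq_bigr => i _ do rewrite !mxE E.
set p := softmax z; set m := \sum_(i < n) v 0 i * p i.
have inner k : \sum_(i < n) v 0 i * (p k * ((k == i)%:R - p i)) = p k * (v 0 k - m).
  transitivity (\sum_(i < n) (p k * ((k == i)%:R * v 0 i) - p k * (v 0 i * p i))).
    by apply: eq_bigr => i _; ring.
  by rewrite sumrB -!big_distrr /= sum_delta' mulrBr.
under eq_bigr => k _ do rewrite inner.
have -> : \sum_(k < n) p k * (v 0 k - m) * v 0 k =
   \sum_(k < n) (p k * (v 0 k - m) ^+ 2 + m * (p k * v 0 k - m * p k)).
  by apply: eq_bigr => k _; ring.
rewrite big_split /= -big_distrr /= sumrB -big_distrr /= sum_softmax.
have -> : \sum_(k < n) p k * v 0 k = m by apply: eq_bigr => k _; rewrite mulrC.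
rewrite mulr1 subrr mulr0 addr0.
apply: sumr_ge0 => k _; apply: mulr_ge0; last exact: sqr_ge0.
exact/ltW/softmax_gt0.
Unshelve. all: by end_near.
Qed.

Lemma DcstB (f : 'rV[R]_n -> R) c x v : derivable f x v ->
  'D_v (fun y => c - f y) x = - 'D_v f x.
Proof.
move=> df; rewrite (_ : (fun y => c - f y) = cst c - f) //.
by rewrite deriveB ?derive_cst ?sub0r //; exact: derivable_cst.
Qed.

Lemma part2_gen (f : 'rV[R]_n -> R) (k : R) (a : 'I_n) (P : 'rV[R]_n -> Prop)
  (z : 'rV[R]_n) :
  (forall y, P y -> \forall w \near y, P w) ->
  (forall y, P y -> f y = k * softmax y a) -> P z ->
  k * (softmax z a * (- (softmax z a * (1 - softmax z a))) +
       (1 - softmax z a) * (softmax z a * (1 - softmax z a))) < 0 ->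
  twice_differentiable f z /\ ~ psd (hessian f z).
Proof.
move=> hP hf Pz hneg.
pose h := fun y : 'rV[R]_n => k * softmax y a.
have dh x : differentiable h x.
  rewrite (_ : h = cst k * (fun y => softmax y a)) //.
  by apply: differentiableM => //; exact: diff_softmax.
have Dh x v : 'D_v h x = k * 'D_v (fun y => softmax y a) x.
  rewrite (_ : h = k \*o (fun y => softmax y a)) //.
  by rewrite deriveMl //; apply/diff_derivable/diff_softmax.
pose g j := fun x : 'rV[R]_n => k * (softmax x a * ((a == j)%:R - softmax x j)).
have H1 : \forall x \near z, differentiable f x /\
      forall j, 'D_(basis_vec R j) f x = g j x.
  move: (hP z Pz); apply: filterS => x Px.
  have near_hf : \forall w \near x, h w = f w.
    by move: (hP x Px); apply: filterS => w Pw; rewrite hf.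
  split; first exact: (near_eq_diff near_hf (dh x)).
  move=> j; rewrite -(near_eq_derive _ near_hf) Dh D_softmax_basis.
  by [].
have H2 j : differentiable (g j) z.
  rewrite (_ : g j = cst k * ((fun y => softmax y a) *
                (fun y => (a == j)%:R - softmax y j))) //.
  apply: differentiableM => //; apply: differentiableM; first exact: diff_softmax.
  by apply: differentiableB => //; exact: diff_softmax.
have [tw ->] := twice_of _ _ _ H1 H2.
split => // /(_ (basis_vec R a)); apply/negP; rewrite -ltNge.
rewrite !mxE.
under eq_bigr => k' _ do rewrite !mxE.
under eq_bigr => k' _ do under eq_bigr => i _ do rewrite !mxE.
under eq_bigr => k' _ do under eq_bigr => i _ do rewrite eqxx /=.
under eq_bigr => k' _ do rewrite sum_delta eqxx /= mulrC.
rewrite sum_delta.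
have dP x : derivable (fun y : 'rV[R]_n => softmax y a) x (basis_vec R a).
  exact/diff_derivable/diff_softmax.
rewrite /g (_ : (fun x => _) = k \*o ((fun y => softmax y a) *
                (fun y => (a == a)%:R - softmax y a))) //.
rewrite deriveMl; last first.
  apply: derivableM => //; apply: derivableB => //; exact: derivable_cst.
rewrite deriveM //; last by apply: derivableB => //; exact: derivable_cst.
rewrite DcstB // D_softmax_basis eqxx.
by rewrite /GRing.scale /=.
Qed.

End Aux.

Lemma min_clip (R : realType) (r A eps : R) : 0 < eps ->
  (0 < A -> r < 1 + eps) -> (A < 0 -> 1 - eps < r) -> A != 0 ->
  Num.min (r * A) (Num.min (Num.max r (1 - eps)) (1 + eps) * A) = r * A.
Proof.
move=> e0 h1 h2 A0.
set c := Num.min (Num.max r (1 - eps)) (1 + eps).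
have [Ap|An] : 0 < A \/ A < 0.
  by move: A0; rewrite neq_lt => /orP[] ?; [right|left].
- have := h1 Ap => {h1 h2} h.
  have rc : r <= c.
    rewrite /c minEle maxEle; case: (leP r (1 - eps)) => h3; (case: ifPn => [h4|]; [|rewrite -ltNge => h4]); lra.
  by rewrite minEle ifT //; nra.
- have := h2 An => {h1 h2} h.
  have rc : c <= r.
    rewrite /c minEle maxEle; case: (leP r (1 - eps)) => h3; (case: ifPn => [h4|]; [|rewrite -ltNge => h4]); lra.
  by rewrite minEle ifT //; nra.
Qed.

Lemma softmax_at (R : realType) (n : nat) (hn : (2 <= n)%N) (a : 'I_n) (s : R) :
  0 < s < 1 ->
  softmax (\row_j (if j == a then ln (s * (n.-1)%:R / (1 - s)) else 0) : 'rV[R]_n) a = s.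
Proof.
move=> /andP[s0 s1].
have m0 : 0 < (n.-1)%:R :> R by rewrite ltr0n; case: n hn a => [|[|n']].
have s1' : 0 < 1 - s by rewrite subr_gt0.
rewrite /softmax (bigD1 a) //= !mxE eqxx.
under eq_bigr => b hb do rewrite mxE (negbTE hb) expR0.
rewrite sumr_const cardC1 card_ord lnK; last first.
  by rewrite posrE divr_gt0 // mulr_gt0.
field; rewrite gt_eqF //=; apply/lt0r_neq0; nra.
Qed.

Theorem lemma4p5 (R : realType) (n : nat) (hn : (2 <= n)%N) :
  (* (i) SFT loss is logits convex *)
  (forall (a : 'I_n) (z : 'rV[R]_n),
      twice_differentiable (sft_loss a) z /\ psd (hessian (sft_loss a) z)) /\
  (* (ii) PPO loss is not logits convex *)
  (forall (a : 'I_n) (piold A eps : R),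
      0 < piold <= 1 -> A != 0 -> 0 < eps < 1 ->
      exists z : 'rV[R]_n,
        twice_differentiable (ppo_loss a piold A eps) z /\
        ~ psd (hessian (ppo_loss a piold A eps) z)).
Proof.
have hn0 : (0 < n)%N by apply: leq_trans hn.
split; first by move=> a z; exact: part1.
move=> a piold A eps /andP[p0 p1] A0 /andP[e0 e1].
set k := - (A / piold).
have key : forall (P : 'rV[R]_n -> Prop) (s : R), 0 < s < 1 ->
    (forall y, P y -> \forall w \near y, P w) ->
    (forall y, P y -> ppo_loss a piold A eps y = k * softmax y a) ->
    (forall y, softmax y a = s -> P y) ->
    k * (s * (- (s * (1 - s))) + (1 - s) * (s * (1 - s))) < 0 ->
    exists z : 'rV[R]_n,
        twice_differentiable (ppo_loss a piold A eps) z /\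
        ~ psd (hessian (ppo_loss a piold A eps) z).
  move=> P s s01 hP hL hs hneg.
  exists (\row_j (if j == a then ln (s * (n.-1)%:R / (1 - s)) else 0)).
  have pz := @softmax_at R n hn a s s01.
  apply: (@part2_gen R n hn0 _ k a P) => //; first by apply: hs.
  by rewrite pz.
have cont y := differentiable_continuous (@diff_softmax R n hn0 a y).
have lossE y : (0 < A -> softmax y a / piold < 1 + eps) ->
    (A < 0 -> 1 - eps < softmax y a / piold) ->
    ppo_loss a piold A eps y = k * softmax y a.
  move=> h1 h2; rewrite /ppo_loss /clip min_clip //.
  by rewrite /k; field; rewrite gt_eqF.
have [Ap|An] : 0 < A \/ A < 0.
  by move: A0; rewrite neq_lt => /orP[] ?; [right|left].
- apply: (key (fun y => softmax y a < piold * (1 + eps)) (piold / 4)).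
  + apply/andP; split; first by rewrite divr_gt0.
    by rewrite ltr_pdivrMr //; lra.
  + by move=> y hy; apply: cvgr_lt (cont y) _ hy.
  + move=> y hy; apply: lossE => [_|?]; last by lra.
    by rewrite ltr_pdivrMr // mulrC.
  + by move=> y ->; nra.
  + have kn : k < 0 by rewrite /k oppr_lt0 divr_gt0.
    have hp : 0 < piold / 4 * (1 - piold / 4) * (1 - 2 * (piold / 4)).
      by apply: mulr_gt0; [apply: mulr_gt0|]; lra.
    nra.
- apply: (key (fun y => piold * (1 - eps) < softmax y a) ((1 + piold * (1 - eps)) / 2)).
  + apply/andP; split; nra.
  + by move=> y hy; apply: cvgr_gt (cont y) _ hy.
  + move=> y hy; apply: lossE => [?|_]; first by lra.
    by rewrite ltr_pdivlMr // mulrC.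
  + by move=> y ->; nra.
  + have kp : 0 < k by rewrite /k oppr_gt0 pmulr_llt0 ?invr_gt0.
    set s := (1 + piold * (1 - eps)) / 2.
    have hs1 : 1 / 2 < s by rewrite /s; nra.
    have hs2 : s < 1 by rewrite /s; nra.
    have hp : s * (1 - s) * (1 - 2 * s) < 0.
      rewrite pmulr_rlt0; last by apply: mulr_gt0; lra.
      lra.
    nra.
Qed.
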